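(* Let $D$ be a non-zero square-free integer and $E: y^2=x^3+D$. Let $Q\in E(\mathbb{Q})$ with $2Q$ not the identity and $Q$ not the identity, and set $P=2Q$. Suppose that $B_Q$ is even, that $3\nmid C_Q$, and that $B_P$ is an $l$th power of an integer for some prime $l$. Then $|C_Q|$ and $2B_Q$ are both $l$th powers of integers.
   Context: For a point $R\in E(\mathbb{Q})$ different from the identity write $x(R)=A_R/B_R^2$, $y(R)=C_R/B_R^3$ with $A_R,B_R,C_R\in\mathbb{Z}$, $B_R>0$ and $\gcd(A_RC_R,B_R)=1$. *)

(* Defs.v *)
From HB Require Import structures.
From mathcomp Require Import all_boot all_order all_algebra.
Set Implicit Arguments. Unset Strict Implicit. Unset Printing Implicit Defensive.
Import Order.TTheory GRing.Theory Num.Theory.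
Local Open Scope ring_scope.

Definition squarefree_int (D : int) : Prop :=
  forall d : int, (d * d %| D)%Z -> `|d| = 1.

Definition on_curve (D : int) (x y : rat) : Prop :=
  y ^+ 2 = x ^+ 3 + D%:~R.

(* Doubling on y^2 = x^3 + D for an affine point with y <> 0 (tangent slope
   3x^2/(2y)); the result is again an affine point. *)
Definition dbl_slope (x y : rat) : rat := (3 * x ^+ 2) / (2 * y).
Definition dbl_x (x y : rat) : rat := dbl_slope x y ^+ 2 - 2 * x.
Definition dbl_y (x y : rat) : rat := dbl_slope x y * (x - dbl_x x y) - y.

Definition std_rep (x y : rat) (A B C : int) : Prop :=
  [/\ 0 < B, coprimez (A * C) B,
      x = A%:~R / (B%:~R) ^+ 2 & y = C%:~R / (B%:~R) ^+ 3].

Definition is_lth_power (l : nat) (n : int) : Prop :=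
  exists m : int, n = m ^+ l.

(* Main.v *)
Require Import Defs.
From HB Require Import structures.
From mathcomp Require Import all_boot all_order all_algebra.
From Stdlib Require Import Ring Field.
Import Order.TTheory GRing.Theory Num.Theory.
Local Open Scope ring_scope.

Definition qadd (x y : rat) : rat := x + y.
Definition qmul (x y : rat) : rat := x * y.
Definition qopp (x : rat) : rat := - x.
Definition qsub (x y : rat) : rat := x - y.
Definition qinv (x : rat) : rat := x^-1.
Definition qdiv (x y : rat) : rat := x / y.
Definition qzero : rat := 0.
Definition qone : rat := 1.

Lemma rat_rt : @ring_theory rat qzero qone qadd qmul qsub qopp eq.
Proof.
constructor=> *; rewrite /qadd /qmul /qsub /qopp /qzero /qone;
 [exact: add0r|exact: addrC|exact: addrA|exact: mul1r|exact: mulrC|exact: mulrA|exact: mulrDl|by []|exact: subrr].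
Qed.
Lemma rat_ft : @field_theory rat qzero qone qadd qmul qsub qopp qdiv qinv eq.
Proof.
constructor=> //; first exact: rat_rt.
by move=> x /eqP; rewrite /qmul /qinv /qone; exact: mulVf.
Qed.
Add Field ratF : rat_ft.

Lemma qaddE (x y : rat) : x + y = qadd x y. Proof. by []. Qed.
Lemma qmulE (x y : rat) : x * y = qmul x y. Proof. by []. Qed.
Lemma qoppE (x : rat) : - x = qopp x. Proof. by []. Qed.
Lemma qinvE (x : rat) : x^-1 = qinv x. Proof. by []. Qed.
Lemma qoneE : 1 = qone :> rat. Proof. by []. Qed.
Lemma qzeroE : 0 = qzero :> rat. Proof. by []. Qed.
Lemma qnat n : n%:R = (n%:R : rat). Proof. by []. Qed.

Ltac qnorm := rewrite ?mulrS ?mulr0n ?exprS ?expr0 ?qinvE ?qmulE ?qoppE ?qaddE ?qoneE ?qzeroE;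
  match goal with |- @eq _ ?l ?r => change (@eq rat l r) end.

Definition zadd (x y : int) : int := x + y.
Definition zmul (x y : int) : int := x * y.
Definition zopp (x : int) : int := - x.
Definition zsub (x y : int) : int := x - y.
Definition zzero : int := 0.
Definition zone : int := 1.
Lemma int_rt : @ring_theory int zzero zone zadd zmul zsub zopp eq.
Proof.
constructor=> *; rewrite /zadd /zmul /zsub /zopp /zzero /zone;
 [exact: add0r|exact: addrC|exact: addrA|exact: mul1r|exact: mulrC|exact: mulrA|exact: mulrDl|by []|exact: subrr].
Qed.
Add Ring intR : int_rt.
Lemma zaddE (x y : int) : x + y = zadd x y. Proof. by []. Qed.
Lemma zmulE (x y : int) : x * y = zmul x y. Proof. by []. Qed.
Lemma zoppE (x : int) : - x = zopp x. Proof. by []. Qed.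
Lemma zoneE : (GRing.one _ : int) = zone. Proof. by []. Qed.
Lemma zzeroE : (0%R : int) = zzero. Proof. by []. Qed.
Lemma zposS n : Posz n.+1 = zadd zone (Posz n). Proof. by rewrite /zadd /zone -addn1 PoszD addrC. Qed.
Lemma zpos0 : Posz 0 = zzero. Proof. by []. Qed.
Lemma znegE n : Negz n = zopp (Posz n.+1). Proof. by rewrite NegzE. Qed.
Ltac znorm := rewrite ?mulrS ?mulr0n ?exprS ?expr0 ?zmulE ?zoppE ?zaddE ?zoneE ?zzeroE ?znegE ?zposS ?zpos0;
  match goal with |- @eq _ ?l ?r => change (@eq int l r) end.

Ltac fside := repeat split; apply/eqP; rewrite /qzero //.

Lemma cross (u v w z : rat) : v != 0 -> z != 0 -> u / v = w / z -> u * z = w * v.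
Proof.
move=> hv hz H.
transitivity ((u / v) * v * z); first by qnorm; field; fside.
rewrite H; qnorm; field; fside.
Qed.

Lemma lpow (u v k l : nat) : coprime u v -> (0 < u)%N -> (0 < v)%N -> (u * v = k ^ l)%N ->
  exists w, u = (w ^ l)%N.
Proof.
move=> cuv u0 v0 H; exists (k`_(\pi(u)))%N.
rewrite -partnX -H partnM // partn_pi // part_p'nat ?muln1 //.
by rewrite -coprime_pi'.
Qed.

Lemma L1 (a b c x y d : rat) : b != 0 -> x = a / b ^+ 2 -> y = c / b ^+ 3 ->
  y ^+ 2 = x ^+ 3 + d -> c ^+ 2 = a ^+ 3 + d * b ^+ 6.
Proof.
move=> hb -> -> H.
transitivity ((c / b ^+ 3) ^+ 2 * b ^+ 6); first by qnorm; field; fside.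
rewrite H; qnorm; field; fside.
Qed.

Lemma L2 (a b c : rat) : b != 0 -> c != 0 ->
  dbl_x (a / b ^+ 2) (c / b ^+ 3) = (a * (9 * a ^+ 3 - 8 * c ^+ 2)) / (2 * b * c) ^+ 2.
Proof.
move=> hb hc; rewrite /dbl_x /dbl_slope; qnorm; field; fside.
Qed.

Lemma PoszX' (w l : nat) : Posz (w ^ l)%N = (Posz w) ^+ l.
Proof. by elim: l => // k IH; rewrite expnS exprS PoszM IH. Qed.

Theorem mainTheorem9 (D : int) (xQ yQ : rat)
    (AQ BQ CQ AP BP CP : int) (l : nat) :
  D != 0 -> squarefree_int D ->
  on_curve D xQ yQ ->
  yQ != 0 ->
  std_rep xQ yQ AQ BQ CQ ->
  std_rep (dbl_x xQ yQ) (dbl_y xQ yQ) AP BP CP ->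
  (2 %| BQ)%Z -> ~~ (3 %| CQ)%Z ->
  prime l -> is_lth_power l BP ->
  is_lth_power l `|CQ| /\ is_lth_power l (2 * BQ).
Proof.
move=> _ sqD onc y0 [B0 cACB ex ey] [BP0 cAPB exP _] B2 n3C _ [m Hm].
have b0 : (BQ%:~R : rat) != 0 by rewrite intr_eq0 gt_eqF.
have c0 : (CQ%:~R : rat) != 0.
  by apply: contra y0; rewrite intr_eq0 ey => /eqP ->; rewrite mul0r.
have bP0 : (BP%:~R : rat) != 0 by rewrite intr_eq0 gt_eqF.
have curve : CQ ^+ 2 = AQ ^+ 3 + D * BQ ^+ 6.
  apply: (@intr_inj rat); rewrite ?(rmorphD, rmorphM, rmorphXn).
  exact: (L1 _ _ _ _ _ _ b0 ex ey onc).
have xP : AP * (2 * BQ * CQ) ^+ 2 = AQ * (9 * AQ ^+ 3 - 8 * CQ ^+ 2) * BP ^+ 2.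
  apply: (@intr_inj rat); rewrite ?(rmorphD, rmorphB, rmorphN, rmorph1, rmorphM, rmorphXn) /=.
  apply: cross; [by rewrite expf_neq0 | by rewrite expf_neq0 // !mulf_neq0 | ].
  rewrite -exP ex ey L2 //.
have cAB : coprimez AQ BQ by move: cACB; rewrite coprimezMl => /andP[].
have cCB : coprimez CQ BQ by move: cACB; rewrite coprimezMl => /andP[].
have cC2 : coprimez CQ 2 := coprimez_dvdr B2 cCB.
have cAC : coprimez AQ CQ.
  have [qa HA] := dvdzP (dvdz_gcdl AQ CQ).
  have [qc HC] := dvdzP (dvdz_gcdr AQ CQ).
  set g := gcdz AQ CQ in HA HC.
  have e : D * BQ ^+ 6 = CQ ^+ 2 - AQ ^+ 3 by rewrite curve; znorm; ring.
  have h1 : (g * g %| D * BQ ^+ 6)%Z.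
    apply/dvdzP; exists (qc ^+ 2 - qa ^+ 3 * g); rewrite e HA HC; znorm; ring.
  have cgB : coprimez g BQ := coprimez_dvdl (dvdz_gcdr AQ CQ) cCB.
  have cg : coprimez (g * g) (BQ ^+ 6) by apply: coprimezXr; rewrite coprimezMl cgB.
  have := sqD _ (etrans (esym (Gauss_dvdzl _ cg)) h1).
  by move=> h; rewrite /coprimez -/g -h ger0_norm.
have c3C : coprimez 3 CQ by rewrite coprimezE /= prime_coprime.
have c9C : coprimez 9 CQ by rewrite (_ : 9 = 3 ^+ 2) // coprimezXl.
have e1 : 9 * AQ ^+ 3 - 8 * CQ ^+ 2 = (-8 * D * BQ ^+ 5) * BQ + AQ ^+ 3.
  by rewrite curve; znorm; ring.
have e2 : 9 * AQ ^+ 3 - 8 * CQ ^+ 2 = (-8 * CQ) * CQ + 9 * AQ ^+ 3.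
  by znorm; ring.
set N := AQ * (9 * AQ ^+ 3 - 8 * CQ ^+ 2) in xP.
have cNB : coprimez N BQ.
  rewrite coprimezMl cAB /= e1 coprimez_sym /coprimez gcdzMDl.
  by rewrite -/(coprimez BQ _) coprimez_sym coprimezXl.
have cNC : coprimez N CQ.
  rewrite coprimezMl cAC /= e2 coprimez_sym /coprimez gcdzMDl.
  by rewrite -/(coprimez CQ _) coprimezMr !(coprimez_sym CQ) c9C coprimezXl.
have cN2 : coprimez N 2 := coprimez_dvdr B2 cNB.
have cNM : coprimez N (2 * BQ * CQ) by rewrite !coprimezMr cN2 cNB cNC.
have cAPB' : coprimez AP BP by move: cAPB; rewrite coprimezMl => /andP[].
set M := 2 * BQ * CQ in xP cNM.
have d1 : (M ^+ 2 %| BP ^+ 2)%Z.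
  have cMN : coprimez (M ^+ 2) N by apply: coprimezXl; rewrite coprimez_sym.
  by rewrite -(Gauss_dvdzr _ cMN) -xP dvdz_mull.
have d2 : (BP ^+ 2 %| M ^+ 2)%Z.
  have cBA : coprimez (BP ^+ 2) AP by apply: coprimezXl; rewrite coprimez_sym.
  by rewrite -(Gauss_dvdzr _ cBA) xP dvdz_mull.
have eBP : `|BP|%N = (2 * `|BQ| * `|CQ|)%N.
  move: d1 d2; rewrite !dvdzE !abszX !dvdn_pexp2r // => d1 d2.
  rewrite (_ : (2 * `|BQ| * `|CQ|)%N = absz M); last by rewrite /M !abszM.
  by apply/eqP; rewrite eqn_dvd d1 d2.
have Hk : (2 * `|BQ| * `|CQ|)%N = (`|m| ^ l)%N by rewrite -eBP Hm abszX.
have cop : coprime (2 * `|BQ|) `|CQ|.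
  rewrite coprimeMl; apply/andP; split; rewrite coprime_sym.
    exact: cC2.
  exact: cCB.
have u0 : (0 < 2 * `|BQ|)%N by rewrite muln_gt0 absz_gt0 gt_eqF.
have v0 : (0 < `|CQ|)%N by rewrite absz_gt0; move: c0; rewrite intr_eq0.
have [w1 Hw1] := lpow _ _ _ _ cop u0 v0 Hk.
have [w2 Hw2] : exists w, `|CQ|%N = (w ^ l)%N.
  apply: (lpow _ (2 * `|BQ|)%N `|m|%N); rewrite 1?coprime_sym // -Hk mulnC //.
split.
  rewrite /is_lth_power; exists (w2%:Z); by rewrite -(abszE CQ) Hw2 PoszX'.
rewrite /is_lth_power; exists (w1%:Z); rewrite (_ : 2 * BQ = Posz (2 * absz BQ)); last by rewrite PoszM gez0_abs // ltW.
by rewrite Hw1 PoszX'.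
Qed.
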